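(* Let $\mathcal G'_3$, $\tau$, $\mathcal G'_6$ and $\mathcal B$ be as in the context. There is a first-order sentence $\psi$ in the signature $\Gamma_6\cup\{<\}$ which is $(\mathcal G'_6,\mathcal B)$-invariant and such that for every $(G,x,y,z)\in\mathcal G'_3$: if $x,y,z$ lie in one connected component and $d(x,y)=d(x,z)$, then $G^\tau\models(\mathfrak B<)\psi$; if $x,y,z$ do not all lie in one connected component, or $|d(x,y)-d(x,z)|\ge 2$, then $G^\tau\models\neg(\mathfrak B<)\psi$.
   Context: Graphs are finite and undirected; $d$ denotes graph distance. A linear order $<$ of the vertex set of a graph, listing vertices $v_1<\dots<v_n$, is a breadth-first traversal (BFT) if for each $i\ge2$, whenever some $v_j$ with $j<i$ has a neighbour outside $\{v_1,\dots,v_{i-1}\}$, $v_i$ is adjacent to $v_{j^*}$ for the least such $j^*$ (i.e. $<$ is a visiting order of breadth-first search). Equivalently: for all $u<v<w$, $uEw$ implies some $x<v$ with $x\le u$ has $xEv$. $\Gamma_n$ is the signature with a binary relation symbol $E$ and $n$ constant symbols; an $n$-pointed graph is a graph with $n$ distinguished vertices. $\mathcal G'_3$ is the family of finite 3-pointed graphs $(G,x,y,z)$ such that, if $x,y,z$ lie in the same connected component, then $|d(x,y)-d(x,z)|\neq 1$. For a 3-pointed graph $(G,x,y,z)$, $G^\tau$ is the 6-pointed graph obtained from two disjoint copies $G_1,G_2$ of $G$ (each with edges inherited from $G$) by adding a single edge between $x_1$ and $x_2$, where $x_i,y_i,z_i$ denote the copies of $x,y,z$ in $G_i$; its constants are $x_1,y_1,z_1,x_2,y_2,z_2$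 (this is given by a 2-dimensional quantifier-free interpretation $\tau:\Gamma_6\to\Gamma_3$). $\mathcal G'_6=\{G^\tau: G\in\mathcal G'_3\}$, and $\mathcal B$ is the family of all expansions $(H,<)$ with $H\in\mathcal G'_6$ and $<$ a BFT of $H$. A $\Gamma_6\cup\{<\}$-sentence $\psi$ is $(\mathcal G'_6,\mathcal B)$-invariant if $(H,<)\models\psi\iff(H',<')\models\psi$ for all $(H,<),(H',<')\in\mathcal B$ with $H\cong H'$. For such $\psi$ and $H\in\mathcal G'_6$, $H\models(\mathfrak B<)\psi$ means $(H,<)\models\psi$ for some (equivalently every) BFT $<$ of $H$. *)

(* Defs.v *)
From mathcomp Require Import all_boot.
Set Implicit Arguments.
Unset Strict Implicit.
Unset Printing Implicit Defensive.

(* Finite graphs: a finType V with a symmetric irreflexive relation E. *)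

Definition walk (V : finType) (E : rel V) (u v : V) (k : nat) : Prop :=
  exists s : seq V, size s = k /\ path E u s /\ last u s = v.

(* d(u,v) = k  (only defined when u and v are connected) *)
Definition is_dist (V : finType) (E : rel V) (u v : V) (k : nat) : Prop :=
  walk E u v k /\ forall m, walk E u v m -> k <= m.

Definition same_comp3 (V : finType) (E : rel V) (x y z : V) : Prop :=
  connect E x y /\ connect E x z.

Definition inG3' (V : finType) (E : rel V) (x y z : V) : Prop :=
  same_comp3 E x y z ->
  forall k1 k2, is_dist E x y k1 -> is_dist E x z k2 ->
    k1 <> k2.+1 /\ k2 <> k1.+1.

Definition dist_gap2 (V : finType) (E : rel V) (x y z : V) : Prop :=
  exists k1 k2, is_dist E x y k1 /\ is_dist E x z k2 /\
                (k1 + 2 <= k2 \/ k2 + 2 <= k1).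

Definition dist_eq (V : finType) (E : rel V) (x y z : V) : Prop :=
  exists k, is_dist E x y k /\ is_dist E x z k.

Definition tauE (V : finType) (E : rel V) (x : V) : rel (V + V)%type :=
  fun a b =>
    match a, b with
    | inl a, inl b => E a b
    | inr a, inr b => E a b
    | inl a, inr b => (a == x) && (b == x)
    | inr a, inl b => (a == x) && (b == x)
    end.

Definition tauC (V : finType) (x y z : V) (i : 'I_6) : (V + V)%type :=
  match val i with
  | 0 => inl x | 1 => inl y | 2 => inl z
  | 3 => inr x | 4 => inr y | _ => inr z
  end.

Definition iso6 (V1 : finType) (E1 : rel V1) (c1 : 'I_6 -> V1)
                (V2 : finType) (E2 : rel V2) (c2 : 'I_6 -> V2) : Prop :=
  exists f : V1 -> V2, bijective f /\
    (forall a b, E2 (f a) (f b) = E1 a b) /\ (forall i, f (c1 i) = c2 i).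

Definition strict_linear (V : finType) (lt : rel V) : Prop :=
  irreflexive lt /\ transitive lt /\ (forall a b, a != b -> lt a b || lt b a).

Definition has_out_nbr (V : finType) (E : rel V) (lt : rel V) (j v : V) : Prop :=
  exists w, E j w /\ ~~ lt w v.

Definition BFT (V : finType) (E : rel V) (lt : rel V) : Prop :=
  strict_linear lt /\
  forall v jstar, lt jstar v -> has_out_nbr E lt jstar v ->
    (forall j, lt j jstar -> ~ has_out_nbr E lt j v) ->
    E jstar v.

(* First-order logic over Gamma_6 u {<}, de Bruijn variables.         *)

Inductive term : Type :=
| TVar of nat
| TConst of 'I_6.

Inductive formula : Type :=
| FEq of term & term
| FE of term & term
| FLt of term & term
| FNot of formula
| FAnd of formula & formula
| FOr of formula & formula
| FEx of formula
| FAll of formula.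

Definition term_wf (k : nat) (t : term) : bool :=
  match t with TVar n => n < k | TConst _ => true end.

Fixpoint formula_wf (k : nat) (f : formula) : bool :=
  match f with
  | FEq s t | FE s t | FLt s t => term_wf k s && term_wf k t
  | FNot g => formula_wf k g
  | FAnd g h | FOr g h => formula_wf k g && formula_wf k h
  | FEx g | FAll g => formula_wf k.+1 g
  end.

Definition sentence (f : formula) : bool := formula_wf 0 f.

Definition scons (V : Type) (v : V) (env : nat -> V) : nat -> V :=
  fun n => match n with 0 => v | n.+1 => env n end.

Section Eval.
Variables (V : finType) (E : rel V) (c : 'I_6 -> V) (lt : rel V).

Definition eval_term (env : nat -> V) (t : term) : V :=
  match t with TVar n => env n | TConst i => c i end.

Fixpoint eval (env : nat -> V) (f : formula) : Prop :=
  match f with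
  | FEq s t => eval_term env s = eval_term env t
  | FE s t => E (eval_term env s) (eval_term env t)
  | FLt s t => lt (eval_term env s) (eval_term env t)
  | FNot g => ~ eval env g
  | FAnd g h => eval env g /\ eval env h
  | FOr g h => eval env g \/ eval env h
  | FEx g => exists v, eval (scons v env) g
  | FAll g => forall v, eval (scons v env) g
  end.
End Eval.

(* truth of a sentence in (V,E,c,<): the environment is irrelevant for
   sentences; we use the constant environment at the first constant *)
Definition sat6 (V : finType) (E : rel V) (c : 'I_6 -> V) (lt : rel V)
  (f : formula) : Prop :=
  eval E c lt (fun _ => c ord0) f.

Definition Bsat (V : finType) (E : rel V) (c : 'I_6 -> V) (f : formula) : Prop :=
  exists lt : rel V, BFT E lt /\ sat6 E c lt f.

(* Main.v *)
Require Import Defs.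
From mathcomp Require Import all_boot.
From Stdlib Require Import Classical.
From mathcomp Require Import zify.
From Stdlib Require Import Lia.
Set Implicit Arguments. Unset Strict Implicit. Unset Printing Implicit Defensive.

Lemma nat_min (P : nat -> Prop) n : P n -> exists m, P m /\ forall k, P k -> m <= k.
Proof.
elim: n {-2}n (leqnn n) => [|n IH] m Hm Pm.
  exists m; split=> // k _; by move: Hm; rewrite leqn0 => /eqP ->.
case: (classic (exists k, P k /\ k < m)) => [[k [Pk Hk]]|NE].
  apply: (IH k) => //; by rewrite -ltnS (leq_trans Hk Hm).
exists m; split=> // k Pk; rewrite leqNgt; apply/negP=> Hk; apply: NE; by exists k.
Qed.

Section Ord.
Variables (W : finType) (lt : rel W).
Hypothesis Hlin : strict_linear lt.

Lemma ltirr a : ~~ lt a a.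
Proof. case: Hlin => H _; by rewrite H. Qed.
Lemma ltirrF a : lt a a = false.
Proof. exact: negbTE (ltirr a). Qed.
Lemma lttr a b c : lt a b -> lt b c -> lt a c.
Proof. case: Hlin => _ [H _] ab bc; exact: H ab bc. Qed.
Lemma ltasym a b : lt a b -> ~~ lt b a.
Proof. move=> ab; apply/negP=> ba; by move: (ltirr a); rewrite (lttr ab ba). Qed.
Lemma lttot a b : a <> b -> lt a b \/ lt b a.
Proof. case: Hlin => _ [_ H] ne; have /orP := H a b (introN eqP ne); by []. Qed.
Lemma ltne a b : lt a b -> a <> b.
Proof. move=> ab e; subst; by move: (ltirr b); rewrite ab. Qed.

Definition rank v := #|[pred u | lt u v]|.
Lemma rank_lt u v : lt u v -> rank u < rank v.
Proof.
move=> uv; rewrite /rank.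
have -> : #|[pred w | lt w u]| = #|[predU1 u & [pred w | lt w u]]|.-1.
  by rewrite cardU1 inE ltirr.
have : 0 < #|[predU1 u & [pred w | lt w u]]| by rewrite cardU1 inE ltirr.
move=> pos; rewrite prednK //; apply: subset_leq_card; apply/subsetP=> w.
rewrite !inE => /orP[/eqP->//|wu]; exact: lttr wu uv.
Qed.

Lemma min_elt (P : W -> Prop) a : P a -> exists m, P m /\ forall u, P u -> u <> m -> lt m u.
Proof.
move=> Pa.
have [n [[m [Pm rm]] Hn]] := @nat_min (fun n => exists v, P v /\ rank v = n) _ (ex_intro _ a (conj Pa erefl)).
exists m; split=> // u Pu ne; case: (lttot ne) => // um.
have := Hn (rank u) (ex_intro _ u (conj Pu erefl)); rewrite -rm leqNgt rank_lt //.
Qed.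
End Ord.

Section Walks.
Variables (W : finType) (F : rel W).
Hypothesis Fsym : symmetric F.

Lemma walk0 u v : walk F u v 0 <-> u = v.
Proof.
split; first by case=> [[|? ?]] [//= _ [_ <-]].
move=> ->; by exists [::].
Qed.

Lemma walk_last r v k : walk F r v k.+1 -> exists w, walk F r w k /\ F w v.
Proof.
case=> s [sz [p l]]; move: sz p l; case/lastP: s => [//|s b].
rewrite size_rcons rcons_path last_rcons => [[sz]] /andP[p e] <-.
exists (last r s); split=> //; by exists s.
Qed.

Lemma walk_first u v k : walk F u v k.+1 -> exists w, F u w /\ walk F w v k.
Proof.
case=> s [sz [p l]]; case: s sz p l => [//|w s] /= [sz] /andP[e p] l.
exists w; split=> //; by exists s.
Qed.

Lemma walk_cons u w v k : F u w -> walk F w v k -> walk F u v k.+1.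
Proof. move=> e [s [sz [p l]]]; exists (w :: s); by rewrite /= sz e p l. Qed.

Lemma walk_rcons r w v k : walk F r w k -> F w v -> walk F r v k.+1.
Proof.
case=> s [sz [p l]] e; exists (rcons s v); rewrite size_rcons rcons_path last_rcons sz p l e; by [].
Qed.

Lemma walk_cat u v w a b : walk F u v a -> walk F v w b -> walk F u w (a + b).
Proof.
case=> s [sz [p l]] [t [sz' [p' l']]]; exists (s ++ t).
by rewrite size_cat cat_path last_cat sz sz' p l p' l'.
Qed.

Lemma walk_sym u v k : walk F u v k -> walk F v u k.
Proof.
elim: k v => [|k IH] v; first by move/walk0 => ->; apply/walk0.
case/walk_last=> w [wk e]; rewrite -add1n; apply: (@walk_cat _ w); last exact: IH.
apply: (@walk_rcons _ v); [exact/walk0 | by rewrite Fsym].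
Qed.

Lemma walk_connect u v k : walk F u v k -> connect F u v.
Proof. case=> s [_ [p l]]; apply/connectP; by exists s. Qed.

Lemma connect_walk u v : connect F u v -> exists k, walk F u v k.
Proof. case/connectP=> s p l; exists (size s), s; by rewrite l. Qed.

Lemma dist_ex u v : connect F u v -> exists k, is_dist F u v k.
Proof. case/connect_walk=> k wk; have [m [Pm Hm]] := @nat_min (fun n => walk F u v n) _ wk; by exists m. Qed.

Lemma dist_uniq u v a b : is_dist F u v a -> is_dist F u v b -> a = b.
Proof. case=> wa ma [wb mb]; apply/eqP; by rewrite eqn_leq ma // mb. Qed.

Lemma dist_nbr r a b i j : is_dist F r a i -> F a b -> is_dist F r b j -> j <= i.+1.
Proof. move=> [wa _] e [_ mb]; apply: mb; exact: walk_rcons wa e. Qed.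

Lemma dist_pred r v k : is_dist F r v k.+1 -> exists w, F w v /\ is_dist F r w k.
Proof.
case=> wv mv; case: (walk_last wv) => w [ww e]; exists w; split=> //; split=> // m wm.
by have := mv _ (walk_rcons wm e).
Qed.

Lemma dist0 r v : is_dist F r v 0 -> v = r.
Proof. by case=> /walk0. Qed.

Lemma dist_self r : is_dist F r r 0.
Proof. split=> //; exact/walk0. Qed.

Lemma dist_conn r v k : is_dist F r v k -> connect F r v.
Proof. case=> w _; exact: walk_connect w. Qed.

Lemma dist_pos r v k : is_dist F r v k -> v <> r -> 0 < k.
Proof. case: k => // /dist0 -> //. Qed.
End Walks.

Section Gen.
Variables (W : finType) (F : rel W) (lt : rel W).
Hypothesis Fsym : symmetric F.
Hypothesis Firr : irreflexive F.
Hypothesis Hbft : BFT F lt.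
Let Hlin : strict_linear lt := Hbft.1.

Lemma crossing (P : W -> Prop) s a : path F a s -> P a -> ~ P (last a s) ->
  exists j w, F j w /\ P j /\ ~ P w /\ connect F a j.
Proof.
elim: s a => [|b s IH] a /=; first by move=> _ Pa nP; case: nP.
case/andP=> e p Pa nP; case: (classic (P b)) => Pb.
  case: (IH b p Pb nP) => j [w [e' [Pj [nPw c]]]]; exists j, w; do 3! split=> //.
  apply: connect_trans c; exact: connect1.
exists a, b; do 3! split=> //.
Qed.

Definition isParent p v := lt p v /\ F p v /\
  (forall j, lt j v -> has_out_nbr F lt j v -> p = j \/ lt p j).

Lemma parent_ex v j : lt j v -> has_out_nbr F lt j v -> exists p, isParent p v.
Proof.
move=> jv hj.
have [m [[mv hm] Hm]] := @min_elt _ _ Hlin (fun j => lt j v /\ has_out_nbr F lt j v) _ (conj jv hj).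
exists m; split=> //; split; last first.
  move=> j' j'v hj'; case: (classic (j' = m)) => [->|ne]; [by left | right; exact: Hm].
apply: (Hbft.2 _ _ mv hm) => j0 j0m hj0.
have ne := ltne Hlin j0m.
have := Hm j0 (conj (lttr Hlin j0m mv) hj0) ne; apply/negP; exact: ltasym.
Qed.

Lemma parent_least p v q : isParent p v -> F q v -> p = q \/ lt p q.
Proof.
case=> pv [_ Hp] e; case: (classic (q = v)) => [qv|ne].
  by subst; rewrite Firr in e.
case: (lttot Hlin ne) => [qv|vq].
  move: (Hp q qv) => H; apply: H; exists v; by rewrite e ltirr.
right; exact: lttr pv vq.
Qed.

Lemma parent_mono pa a pb b : isParent pa a -> isParent pb b -> lt a b -> pa = pb \/ lt pa pb.
Proof.
case=> paa [_ Ha] [pbb [eb _]] ab.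
case: (classic (lt pb a)) => pba.
  move: (Ha pb pba) => H; apply: H; exists b; by rewrite eb (ltasym Hlin ab).
case: (classic (pb = a)) => [->|ne]; first by right.
case: (lttot Hlin ne) => // apb; right; exact: lttr paa apb.
Qed.

Lemma interval u a b : lt u a -> lt a b -> connect F u b -> connect F u a.
Proof.
move=> ua ab ub; apply: NNPP => nua.
pose P a := exists u b, lt u a /\ lt a b /\ connect F u b /\ ~ connect F u a.
have [m [[c1 [c2 [c1m [mc2 [c12 nc1m]]]]] Hm]] :=
  @min_elt _ _ Hlin P _ (ex_intro _ u (ex_intro _ b (conj ua (conj ab (conj ub nua))))).
have c12' := c12.
case/connectP: c12 => s ps ls.
have nl : ~ lt (last c1 s) m by rewrite -ls; apply/negP/(ltasym Hlin).
have [j0 [w [e [j0m [nwm cj0]]]]] := @crossing (fun t => lt t m) s c1 ps c1m nl.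
have hj0 : has_out_nbr F lt j0 m by exists w; split=> //; apply/negP.
have [p [pm [pe Hp]]] := @parent_ex m j0 j0m hj0.
have csym := sym_connect_sym Fsym.
have cpm : connect F p m := connect1 pe.
case: (Hp j0 j0m hj0) => [pj0|pj0].
  subst; apply: nc1m; exact: connect_trans cj0 cpm.
case: (classic (c1 = p)) => [c1p|ne].
  by subst; apply: nc1m.
have mne : forall t, lt t m -> t <> m.
  move=> t tm; move: (ltne Hlin tm) => H. exact H.

case: (lttot Hlin ne) => c1p.
- have ncp : ~ connect F c1 p by move=> h; apply: nc1m; exact: connect_trans h cpm.
  have Pp : P p.
    exists c1, c2; split=> //; split; last by []; exact (lttr Hlin pj0 (lttr Hlin j0m mc2)).
  by move: (Hm p Pp (mne _ pm)); apply/negP/(ltasym Hlin).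
- have npc : ~ connect F p c1.
    move=> h; apply: nc1m; rewrite csym in h; exact: connect_trans h cpm.
  have Pc : P c1 by exists p, m; do 3! split=> //.
  by move: (Hm c1 Pc (mne _ c1m)); apply/negP/(ltasym Hlin).
Qed.

Definition RootS w := ~ exists n, F n w /\ lt n w.
Definition SameS a b := ~ exists w, RootS w /\
   ((lt a w /\ (lt w b \/ w = b)) \/ (lt b w /\ (lt w a \/ w = a))).

Lemma root_noconn w u : RootS w -> lt u w -> ~ connect F u w.
Proof.
move=> Rw uw /connectP[s ps ls].
have nl : ~ lt (last u s) w by rewrite -ls; apply/negP/(ltirr Hlin).
have [j [w' [e [jw [nw _]]]]] := @crossing (fun t => lt t w) s u ps uw nl.
have hj : has_out_nbr F lt j w by exists w'; split=> //; apply/negP.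
have [p [pw [pe _]]] := @parent_ex w j jw hj.
apply: Rw; by exists p.
Qed.

Lemma root_between u v : lt u v -> ~ connect F u v ->
  exists w, RootS w /\ lt u w /\ (lt w v \/ w = v).
Proof.
move=> uv nuv.
have csym := sym_connect_sym Fsym.
have [m [vm Hm]] := @min_elt _ _ Hlin (connect F v) _ (connect0 F v).
have mv : lt m v \/ m = v.
  case: (classic (v = m)) => [->|ne]; [by right | left; exact: Hm].
exists m; split; last split=> //.
- move=> [n [e nm]].
  have vn : connect F v n by apply: connect_trans vm (connect1 _); rewrite Fsym.
  have ne : n <> m by move=> nm'; subst; rewrite Firr in e.
  have := Hm n vn ne; apply/negP; exact: ltasym.
- case: (classic (u = m)) => [um|ne].
    subst; exfalso; apply: nuv; by rewrite csym.
  case: (lttot Hlin ne) => // mu; exfalso.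
  have mv' : connect F m v by rewrite csym.
  have mu' : connect F m u.
    case: mv => [mv|e]; first exact: interval mu uv mv'.
    by subst; move: (lttr Hlin mu uv); rewrite (ltirrF Hlin).
  apply: nuv; rewrite csym in mu'; exact: connect_trans mu' mv'.
Qed.

Lemma same_iff a b : SameS a b <-> connect F a b.
Proof.
have csym := sym_connect_sym Fsym.
have key : forall a b w, connect F a b -> RootS w -> lt a w -> lt w b \/ w = b -> False.
  move=> a' b' w ab Rw aw [wb|e].
    exact: root_noconn Rw aw (interval aw wb ab).
  subst; exact: root_noconn Rw aw ab.
split=> [S|ab [w [Rw [[aw wb]|[bw wa]]]]].
- apply: NNPP => nab; case: (classic (a = b)) => [e|ne].
    by subst; apply: nab; exact: connect0.
  case: (lttot Hlin ne) => [ab|ba].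
    have [w [Rw [aw wb]]] := root_between ab nab; apply: S; exists w; split=> //; by left.
  have nba : ~ connect F b a by rewrite csym.
  have [w [Rw [bw wa]]] := root_between ba nba; apply: S; exists w; split=> //; by right.
- exact: key ab Rw aw wb.
- rewrite csym in ab; exact: key ab Rw bw wa.
Qed.

Lemma comp_parent r v : (forall t, connect F r t -> t <> r -> lt r t) ->
  connect F r v -> v <> r -> exists p, isParent p v.
Proof.
move=> Hr rv vr; have ltrv := Hr v rv vr.
case/connectP: rv => s ps ls.
have nl : ~ lt (last r s) v by rewrite -ls; apply/negP/(ltirr Hlin).
have [j [w [e [jv [nw _]]]]] := @crossing (fun t => lt t v) s r ps ltrv nl.
have hj : has_out_nbr F lt j v by exists w; split=> //; apply/negP.
exact: parent_ex jv hj.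
Qed.

Lemma dist_mono r : (forall t, connect F r t -> t <> r -> lt r t) ->
  forall u v j m, is_dist F r u j -> is_dist F r v m -> j < m -> lt u v.
Proof.
move=> Hr.
suff H : forall k u v j m, j <= k -> is_dist F r u j -> is_dist F r v m -> j < m -> lt u v.
  move=> u0 v0 j0 m0; exact: (H j0 u0 v0 j0 m0 (leqnn j0)).
elim=> [|k IH] u v j m.
  rewrite leqn0 => /eqP -> /dist0 -> dv m0; apply: Hr; first exact: dist_conn dv.
  move=> e; subst; have := dist_uniq dv (dist_self F r); move=> e; by rewrite e in m0.
rewrite leq_eqVlt => /orP[/eqP ->|jk]; last by apply: IH; rewrite -ltnS.
move=> du dv km; apply: NNPP => nuv.
have uv : u <> v by move=> e; subst; have := dist_uniq du dv => e; by rewrite e ltnn in km.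
have vu : lt v u by case: (lttot Hlin uv).
have vr : v <> r by move=> e; subst; have := dist_uniq dv (dist_self F r) => e; by rewrite e in km.
have ur : u <> r by move=> e; subst; have := dist_uniq du (dist_self F r).
have [pu Pu] := comp_parent Hr (dist_conn du) ur.
have [pv Pv] := comp_parent Hr (dist_conn dv) vr.
have [w [ewu dw]] := dist_pred du.
have cpu : connect F r pu.
  apply: connect_trans (dist_conn du) (connect1 _); rewrite Fsym; exact: Pu.2.1.
have cpv : connect F r pv.
  apply: connect_trans (dist_conn dv) (connect1 _); rewrite Fsym; exact: Pv.2.1.
have [jp djp] := dist_ex cpu.
have [mp dmp] := dist_ex cpv.
have jpk : jp <= k.
  rewrite leqNgt; apply/negP => kjp.
  have wpu := IH w pu k jp (leqnn k) dw djp kjp.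
  case: (parent_least Pu ewu) => [e|puw].
    by subst; rewrite (ltirrF Hlin) in wpu.
  by move: (lttr Hlin wpu puw); rewrite (ltirrF Hlin).
have mmp := dist_nbr dmp Pv.2.1 dv.
have jpmp : jp < mp by lia.
have pupv := IH pu pv jp mp jpk djp dmp jpmp.
case: (parent_mono Pv Pu vu) => [e|pvpu].
  by subst; rewrite (ltirrF Hlin) in pupv.
by move: (lttr Hlin pupv pvpu); rewrite (ltirrF Hlin).
Qed.

Definition PhiS u v := (exists p, F p u /\ lt p v) /\ (exists q, F q v /\ lt q u).

Lemma phi_eq r u v d : (forall t, connect F r t -> t <> r -> lt r t) ->
  is_dist F r u d.+1 -> is_dist F r v d.+1 -> PhiS u v.
Proof.
move=> Hr du dv.
have [p [pu dp]] := dist_pred du; have [q [qv dq]] := dist_pred dv.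
split; [exists p | exists q]; split=> //; exact: dist_mono Hr _ _ _ _ _ _ (ltnSn d).
Qed.

Lemma phi_gap r u v du dv : (forall t, connect F r t -> t <> r -> lt r t) ->
  is_dist F r u du -> is_dist F r v dv -> du.+2 <= dv -> ~ PhiS u v.
Proof.
move=> Hr Du Dv gap [_ [q [qv qu]]].
have cq : connect F r q.
  apply: connect_trans (dist_conn Dv) (connect1 _); by rewrite Fsym.
have [dq Dq] := dist_ex cq.
have := dist_nbr Dq qv Dv => h.
have uq : lt u q by apply: (dist_mono Hr Du Dq); lia.
by move: (ltasym Hlin uq); rewrite qu.
Qed.

Lemma phi_sym u v : PhiS u v <-> PhiS v u.
Proof. by rewrite /PhiS; split=> [[]|[]]. Qed.
End Gen.

Section Tau.
Variables (V : finType) (E : rel V) (x : V).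
Hypothesis Esym : symmetric E.
Hypothesis Eirr : irreflexive E.

Definition inj (b : bool) (a : V) : (V + V)%type := if b then inl a else inr a.
Definition proj (t : (V + V)%type) : V := match t with inl a => a | inr a => a end.
Notation T := (tauE E x).

Lemma tau_sym : symmetric T.
Proof.
case=> a [] b /=; by [apply: Esym | rewrite andbC].
Qed.

Lemma tau_irr : irreflexive T.
Proof. by case=> a /=; rewrite Eirr. Qed.

Lemma tau_same b a c : T (inj b a) (inj b c) = E a c.
Proof. by case: b. Qed.

Lemma tau_cross b a c : T (inj b a) (inj (~~ b) c) = (a == x) && (c == x).
Proof. by case: b. Qed.

Lemma inj_surj t : exists b a, t = inj b a.
Proof. case: t => a; [exists true | exists false]; by exists a. Qed.

Lemma proj_inj b a : proj (inj b a) = a.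
Proof. by case: b. Qed.

Lemma inj_inj b a c : inj b a = inj b c -> a = c.
Proof. by case: b => [] []. Qed.

Lemma inj_neq b a c : inj b a <> inj (~~ b) c.
Proof. by case: b. Qed.

Lemma walk_lift b a c k : walk E a c k -> walk T (inj b a) (inj b c) k.
Proof.
elim: k a => [|k IH] a; first by move/walk0 => ->; apply/walk0.
case/walk_first => w [e wk]; apply: (@walk_cons _ _ _ (inj b w)); last exact: IH.
by rewrite tau_same.
Qed.

Lemma walk_proj t u k : walk T t u k -> exists k', k' <= k /\ walk E (proj t) (proj u) k'.
Proof.
elim: k t => [|k IH] t; first by move/walk0 => ->; exists 0; split=> //; apply/walk0.
case/walk_first => w [e wk]; case: (IH w wk) => k' [kk wk'].
have [b [a et]] := inj_surj t; have [c [d ew]] := inj_surj w; subst w t.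
move: wk'; rewrite !proj_inj => wk'.
case: (boolP (c == b)) => /eqP cb.
  subst c; exists k'.+1; split; first by rewrite ltnS.
  apply: (@walk_cons _ _ _ d) wk'; by rewrite -(tau_same b).
have cnb : c = ~~ b by case: b c cb {e wk wk'} => [] [].
subst c; move: e; rewrite tau_cross => /andP[/eqP ea /eqP ed]; subst a d.
exists k'; split; first exact: leqW kk. exact: wk'.
Qed.

Lemma conn_lift b a c : connect E a c -> connect T (inj b a) (inj b c).
Proof. case/(connect_walk) => k wk; exact: walk_connect (walk_lift b wk). Qed.

Lemma conn_proj b a c d : connect T (inj b a) (inj c d) -> connect E a d.
Proof. case/connect_walk => k wk; case: (walk_proj wk) => k' [_]; rewrite !proj_inj; exact: walk_connect. Qed.

Lemma conn_cross b : connect T (inj b x) (inj (~~ b) x).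
Proof. apply: connect1; by rewrite tau_cross !eqxx. Qed.

Lemma walk_decomp b u a m : walk T (inj b u) (inj (~~ b) a) m ->
  exists m1 m2, m = m1 + m2.+1 /\ walk T (inj b u) (inj b x) m1 /\
                walk T (inj (~~ b) x) (inj (~~ b) a) m2.
Proof.
elim: m u => [|m IH] u.
  by move/walk0 => /inj_neq.
case/walk_first => w [e wk]; have [c [d ew]] := inj_surj w; subst w.
case: (boolP (c == b)) => /eqP cb.
  subst; case: (IH d wk) => m1 [m2 [-> [w1 w2]]]; exists m1.+1, m2; split; first by lia.
  split=> //; exact: walk_cons e w1.
have cnb : c = ~~ b by move: cb; case: b {IH e wk}; case: c.
subst c; move: e; rewrite tau_cross => /andP[/eqP eu /eqP ed]; subst u d.
exists 0, m; split=> //; split=> //; exact/walk0.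
Qed.

Lemma far_dist b r D a k : is_dist T r (inj b x) D -> is_dist E x a k ->
  (forall m, walk T r (inj (~~ b) a) m -> exists m1 m2, m = m1 + m2.+1 /\ walk T r (inj b x) m1 /\
                walk T (inj (~~ b) x) (inj (~~ b) a) m2) ->
  is_dist T r (inj (~~ b) a) (D + k.+1).
Proof.
move=> [wD mD] [wk mk] Hdec; split.
  apply: walk_cat wD _; apply: walk_cons (walk_lift _ wk); by rewrite tau_cross !eqxx.
move=> m /Hdec [m1 [m2 [-> [w1 w2]]]].
have := mD _ w1; case: (walk_proj w2) => k' [k'm2]; rewrite !proj_inj => /mk kk' D1.
lia.
Qed.
End Tau.

Definition X1 := TConst (@Ordinal 6 0 isT).
Definition Y1 := TConst (@Ordinal 6 1 isT).
Definition Z1 := TConst (@Ordinal 6 2 isT).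
Definition X2 := TConst (@Ordinal 6 3 isT).
Definition Y2 := TConst (@Ordinal 6 4 isT).
Definition Z2 := TConst (@Ordinal 6 5 isT).

Definition RootF := FNot (FEx (FAnd (FE (TVar 0) (TVar 1)) (FLt (TVar 0) (TVar 1)))).
Definition LeF a b := FOr (FLt a b) (FEq a b).
Definition SameF a b := FNot (FEx (FAnd RootF
  (FOr (FAnd (FLt a (TVar 0)) (LeF (TVar 0) b)) (FAnd (FLt b (TVar 0)) (LeF (TVar 0) a))))).
Definition PhiF u v := FAnd (FEx (FAnd (FE (TVar 0) u) (FLt (TVar 0) v)))
                            (FEx (FAnd (FE (TVar 0) v) (FLt (TVar 0) u))).
Definition ImpF a b := FOr (FNot a) b.
Definition psi := FAnd (SameF X1 Y1) (FAnd (SameF X1 Z1)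
   (FAnd (ImpF (FLt X1 X2) (PhiF Y2 Z2)) (ImpF (FLt X2 X1) (PhiF Y1 Z1)))).

Lemma psi_sentence : sentence psi.
Proof. by []. Qed.

Lemma psi_sem (W : finType) (F : rel W) (c : 'I_6 -> W) (lt : rel W) env :
  eval F c lt env psi <->
  SameS F lt (c (@Ordinal 6 0 isT)) (c (@Ordinal 6 1 isT)) /\
  SameS F lt (c (@Ordinal 6 0 isT)) (c (@Ordinal 6 2 isT)) /\
  (lt (c (@Ordinal 6 0 isT)) (c (@Ordinal 6 3 isT)) ->
     PhiS F lt (c (@Ordinal 6 4 isT)) (c (@Ordinal 6 5 isT))) /\
  (lt (c (@Ordinal 6 3 isT)) (c (@Ordinal 6 0 isT)) ->
     PhiS F lt (c (@Ordinal 6 1 isT)) (c (@Ordinal 6 2 isT))).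
Proof.
have imp : forall (A : Prop) B, (~ A \/ B) <-> (A -> B).
  move=> A B; split=> [[nA|b] a //|H]; case: (classic A) => a; [right; exact: H | by left].
rewrite /= /SameS /RootS /PhiS.
rewrite !imp; split=> [[? [? [? ?]]]|[? [? [? ?]]]]; do !split=> //.
Qed.

Section Main.
Variables (V : finType) (E : rel V) (x y z : V).
Hypothesis Esym : symmetric E.
Hypothesis Eirr : irreflexive E.
Hypothesis HG : inG3' E x y z.
Notation T := (tauE E x).

Lemma conn_any c a : connect E x a -> connect T (inl x) (inj c a).
Proof.
move=> xa; case: c; first exact: (conn_lift x true xa).
apply: connect_trans (conn_cross E x true) (conn_lift x false xa).
Qed.

Lemma main_sem (lt : rel (V + V)%type) : BFT T lt ->
  (sat6 T (tauC x y z) lt psi <-> same_comp3 E x y z /\ dist_eq E x y z).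
Proof.
move=> Hbft; have Hlin := Hbft.1.
have Tsym := tau_sym x Esym; have Tirr : irreflexive T := tau_irr x Eirr.
have csym := sym_connect_sym Tsym.
rewrite /sat6 psi_sem /= !(same_iff Tsym Tirr Hbft).
case: (classic (same_comp3 E x y z)) => [[cy cz]|ns]; last first.
  split=> [[cy [cz _]]|[]] //; exfalso; apply: ns; split.
  - exact: (conn_proj (b:=true) (c:=true) cy).
  - exact: (conn_proj (b:=true) (c:=true) cz).
have [r [cr Hr0]] := @min_elt _ _ Hlin (connect T (inl x)) _ (connect0 T (inl x)).
have Hr : forall t, connect T r t -> t <> r -> lt r t.
  move=> t rt; apply: Hr0; exact: connect_trans cr rt.
have rc : forall c a, connect E x a -> connect T r (inj c a).
  move=> c a xa; rewrite csym in cr; exact: connect_trans cr (conn_any c xa).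
have [b [r0 er]] := inj_surj r; subst r.
have [D DD] := dist_ex (rc b x (connect0 E x)).
have dec : forall a m, walk T (inj b r0) (inj (~~ b) a) m -> exists m1 m2, m = m1 + m2.+1 /\
     walk T (inj b r0) (inj b x) m1 /\ walk T (inj (~~ b) x) (inj (~~ b) a) m2.
  move=> a m; exact: walk_decomp.
have [ky Dy] := dist_ex cy; have [kz Dz] := dist_ex cz.
have Fy := far_dist DD Dy (dec y); have Fz := far_dist DD Dz (dec z).
have Fx := far_dist DD (dist_self E x) (dec x).
have nf : lt (inj b x) (inj (~~ b) x).
  apply: (dist_mono Tsym Tirr Hbft Hr DD Fx); lia.
have [g1 g2] := HG (conj cy cz) Dy Dz.
have deq : dist_eq E x y z <-> ky = kz.
  split=> [[k [d1 d2]]|e]; last by exists ky; split=> //; rewrite e.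
  by rewrite (dist_uniq Dy d1) (dist_uniq Dz d2).
rewrite deq.
have key : PhiS T lt (inj (~~ b) y) (inj (~~ b) z) <-> ky = kz.
  split=> [Ph|e].
  - apply: NNPP => ne.
    have [h|h] : ky.+2 <= kz \/ kz.+2 <= ky by lia.
    + apply: (phi_gap Tsym Tirr Hbft Hr Fy Fz _ Ph); lia.
    + rewrite (phi_sym T lt) in Ph; apply: (phi_gap Tsym Tirr Hbft Hr Fz Fy _ Ph); lia.
  - subst kz; rewrite addnS in Fy Fz; exact: (phi_eq Tsym Tirr Hbft Hr Fy Fz).
rewrite -key.
have Hcx : connect T (inl x) (inl y) /\ connect T (inl x) (inl z).
  split; [exact: (conn_any true cy) | exact: (conn_any true cz)].
case: Hcx => Hc1 Hc2.
case: b {Hr0 cr Hr rc DD dec Fy Fz Fx} nf key => /= nf key; rewrite /tauC /=.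
- split=> [[_ [_ [H _]]]|[_ Ph]]; first by split; [by split | exact: H nf].
  split=> //; split=> //; split=> // h; by move: (ltasym Hlin nf); rewrite h.
- split=> [[_ [_ [_ H]]]|[_ Ph]]; first by split; [by split | exact: H nf].
  split=> //; split=> //; split=> // h; by move: (ltasym Hlin nf); rewrite h.
Qed.
End Main.

Section Exist.
Variables (W : finType) (F : rel W) (x0 : W).

Definition hasout (p : seq W) (j : W) := [exists w, F j w && (w \notin p)].
Definition nextv (p : seq W) : W :=
  let j := nth x0 p (find (hasout p) p) in
  odflt (odflt x0 [pick v | v \notin p]) [pick v | F j v && (v \notin p)].
Definition build n := iter n (fun p => rcons p (nextv p)) [::].

Lemma build_S n : build n.+1 = rcons (build n) (nextv (build n)).
Proof. by []. Qed.

Lemma size_build n : size (build n) = n.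
Proof. elim: n => //= n IH; by rewrite size_rcons IH. Qed.

Lemma nextv_notin p : uniq p -> size p < #|W| -> nextv p \notin p.
Proof.
move=> up sp; rewrite /nextv.
case: (pickP (fun v => F (nth x0 p (find (hasout p) p)) v && (v \notin p))) => [v |_] /=; first by case/andP.
case: (pickP (fun v => v \notin p)) => [v //|H] /=.
have : #|W| <= size p.
  rewrite -(card_uniqP up); apply: subset_leq_card; apply/subsetP=> v _.
  by have := H v; rewrite /= => /negbFE.
by rewrite leqNgt sp.
Qed.

Lemma uniq_build n : n <= #|W| -> uniq (build n).
Proof.
elim: n => // n IH le; rewrite build_S rcons_uniq IH ?andbT; last exact: ltnW.
apply: nextv_notin; [exact: IH (ltnW le) | by rewrite size_build].
Qed.

Lemma take_build n i : i <= n -> take i (build n) = build i.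
Proof.
elim: n => [|n IH]; first by rewrite leqn0 => /eqP ->.
rewrite leq_eqVlt => /orP[/eqP ->|lt]; first by rewrite take_oversize // size_build.
rewrite build_S -cats1 takel_cat ?size_build //; exact: IH.
Qed.

Lemma nth_build n i : i < n -> nth x0 (build n) i = nextv (build i).
Proof.
move=> lt; rewrite -(nth_take x0 (ltnSn i)) take_build // build_S nth_rcons size_build ltnn eqxx //.
Qed.

Definition sB := build #|W|.
Definition ltB : rel W := fun a b => index a sB < index b sB.

Lemma uniq_sB : uniq sB.
Proof. exact: uniq_build. Qed.

Lemma mem_sB v : v \in sB.
Proof.
have cs : #|sB| = #|predT : pred W|.
  by rewrite (card_uniqP uniq_sB) size_build.
have sub : sB \subset predT by apply/subsetP.
move/(subset_cardP cs): sub => eqs; by rewrite eqs.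
Qed.

Lemma ltB_lin : strict_linear ltB.
Proof.
split; first by move=> a; rewrite /ltB ltnn.
split; first by move=> b a c; rewrite /ltB; exact: ltn_trans.
move=> a b ne; rewrite /ltB -neq_ltn; apply: contra ne => /eqP e.
by rewrite -(nth_index x0 (mem_sB a)) e nth_index // mem_sB.
Qed.

Lemma ltB_BFT : BFT F ltB.
Proof.
split; first exact: ltB_lin.
move=> v js jv [w [ew nw]] Hmin.
set i := index v sB.
have isz : i < size sB by rewrite index_mem mem_sB.
have iW : i < #|W| by move: isz; rewrite /sB size_build.
have vi : v = nextv (build i).
  by rewrite -{1}(nth_index x0 (mem_sB v)) /sB nth_build.
set p := build i.
have pe : p = take i sB by rewrite /p /sB take_build // ltnW.
have inp : forall t, (t \in p) = (index t sB < i) by move=> t; rewrite pe in_take // mem_sB.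
have hj : hasout p js by apply/existsP; exists w; rewrite ew inp.
have hs : has (hasout p) p by apply/hasP; exists js => //; rewrite inp.
set f := find (hasout p) p.
have fp : f < size p by rewrite -has_find.
set jj := nth x0 p f.
have hjj : hasout p jj by exact: nth_find.
have idxjj : index jj sB = f.
  rewrite /jj pe nth_take; last by rewrite -(size_build i) -/p.
  apply: index_uniq; last exact: uniq_sB.
  move: fp; rewrite /p size_build => fi; exact: ltn_trans fi isz.
have ejj : js = jj.
  have jsp : js \in p by rewrite inp.
  have idxjs : index js p = index js sB.
    have -> : index js sB = index js (take i sB ++ drop i sB) by rewrite cat_take_drop.
    by rewrite index_cat -pe jsp.
  case: (ltngtP (index js p) f) => [lt|gt|eq].
  - by move: (before_find x0 lt); rewrite nth_index // hj.
  - exfalso; apply: (Hmin jj).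
      by rewrite /ltB idxjj -idxjs.
    case/existsP: hjj => w' /andP[e' n']; exists w'; split=> //; by rewrite /ltB -/i -inp.
  - by rewrite /jj -eq nth_index.
have : F jj v.
  rewrite vi /nextv -/p -/f -/jj.
  case: (pickP (fun v => F jj v && (v \notin p))) => [u /andP[//]|H].
  case/existsP: hjj => w' /andP[e' n']; by move: (H w'); rewrite e' n'.
by rewrite ejj.
Qed.
End Exist.

Lemma BFT_exists (W : finType) (F : rel W) (x0 : W) : exists lt, BFT F lt.
Proof. exists (ltB F x0); exact: ltB_BFT. Qed.

Section Iso.
Variables (W1 W2 : finType) (F1 : rel W1) (F2 : rel W2) (c1 : 'I_6 -> W1) (c2 : 'I_6 -> W2).
Variables (f : W1 -> W2) (g : W2 -> W1).
Hypothesis fK : cancel f g.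
Hypothesis gK : cancel g f.
Hypothesis hE : forall a b, F2 (f a) (f b) = F1 a b.
Hypothesis hc : forall i, f (c1 i) = c2 i.
Variable lt2 : rel W2.
Definition lt1 : rel W1 := fun a b => lt2 (f a) (f b).

Lemma finj : injective f. Proof. exact: can_inj fK. Qed.

Lemma BFT_pull : BFT F2 lt2 -> BFT F1 lt1.
Proof.
case=> [[irr [tr tot]] H]; split.
  split; first by move=> a; rewrite /lt1 irr.
  split; first by move=> b a c; rewrite /lt1; exact: tr.
  move=> a b ne; apply: tot; apply: contra ne => /eqP e; apply/eqP; exact: finj e.
move=> v js jv [w [ew nw]] Hmin; rewrite -hE; apply: H => //.
  exists (f w); by rewrite hE.
move=> j jl [w' [e' n']]; apply: (Hmin (g j)); first by rewrite /lt1 gK.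
exists (g w'); by rewrite -hE /lt1 !gK.
Qed.

Lemma eval_pull phi : forall env1 env2, (forall n, f (env1 n) = env2 n) ->
  (eval F1 c1 lt1 env1 phi <-> eval F2 c2 lt2 env2 phi).
Proof.
have et : forall env1 env2 t, (forall n, f (env1 n) = env2 n) ->
    f (eval_term c1 env1 t) = eval_term c2 env2 t.
  by move=> env1 env2 [n|i] H /=.
elim: phi => [s t|s t|s t|p IH|p IHp q IHq|p IHp q IHq|p IH|p IH] env1 env2 H /=.
- rewrite -(et _ _ s H) -(et _ _ t H); split=> [->//|]; exact: finj.
- by rewrite -(et _ _ s H) -(et _ _ t H) hE.
- by rewrite -(et _ _ s H) -(et _ _ t H).
- by rewrite (IH _ _ H).
- by rewrite (IHp _ _ H) (IHq _ _ H).
- by rewrite (IHp _ _ H) (IHq _ _ H).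
- split=> [[v Hv]|[v Hv]].
    exists (f v); apply/(IH (scons v env1) (scons (f v) env2)) => //; by case.
  exists (g v); apply/(IH (scons (g v) env1) (scons v env2)) => //; case=> //= ; by rewrite gK.
- split=> Hv v.
    have := Hv (g v); move/(IH (scons (g v) env1) (scons v env2)); apply; case=> //=; by rewrite gK.
  apply/(IH (scons v env1) (scons (f v) env2)) => //; by case.
Qed.
End Iso.
Unset Implicit Arguments.
Theorem theorem1 :
  exists psi : formula,
    sentence psi /\
    (* (G'_6, B)-invariance *)
    (forall (V1 : finType) (E1 : rel V1) (x1 y1 z1 : V1)
            (V2 : finType) (E2 : rel V2) (x2 y2 z2 : V2),
        symmetric E1 -> irreflexive E1 -> inG3' E1 x1 y1 z1 ->
        symmetric E2 -> irreflexive E2 -> inG3' E2 x2 y2 z2 ->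
        iso6 (tauE E1 x1) (tauC x1 y1 z1) (tauE E2 x2) (tauC x2 y2 z2) ->
        forall (lt1 : rel (V1 + V1)%type) (lt2 : rel (V2 + V2)%type),
          BFT (tauE E1 x1) lt1 -> BFT (tauE E2 x2) lt2 ->
          (sat6 (tauE E1 x1) (tauC x1 y1 z1) lt1 psi <->
           sat6 (tauE E2 x2) (tauC x2 y2 z2) lt2 psi)) /\
    (forall (V : finType) (E : rel V) (x y z : V),
        symmetric E -> irreflexive E -> inG3' E x y z ->
        ((same_comp3 E x y z /\ dist_eq E x y z) ->
           Bsat (tauE E x) (tauC x y z) psi) /\
        ((~ same_comp3 E x y z \/ dist_gap2 E x y z) ->
           ~ Bsat (tauE E x) (tauC x y z) psi)).
Proof.
exists psi; split; first exact: psi_sentence.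
split.
- move=> V1 E1 x1 y1 z1 V2 E2 x2 y2 z2 s1 i1 h1 s2 i2 h2 [f [[g fK gK] [hE hc]]] lt1 lt2 B1 B2.
  rewrite (main_sem s1 i1 h1 B1).
  have B1' := BFT_pull fK gK hE B2.
  rewrite -(main_sem s1 i1 h1 B1').
  rewrite /sat6; apply: eval_pull => //.
- move=> V E x y z s i h; split.
  + move=> P; have [lt B] := BFT_exists (tauE E x) (inl x).
    exists lt; split=> //; exact/(main_sem s i h B).
  + move=> H [lt [B S]]; move/(main_sem s i h B): S => [sc [k [e1 e2]]].
    case: H => [//|[k1 [k2 [d1 [d2 hh]]]]].
    have := dist_uniq d1 e1; have := dist_uniq d2 e2; lia.
Qed.
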